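(* Let $C\in\mathscr{C}$ and let $k_C\colon K_C\to C$ be obtained as follows: choose a distinguished triangle $S[-1]\to C\overset{a}{\to}T\to S$ with $S\in\mathcal{S},T\in\mathcal{T}$; choose a distinguished triangle $U\to T\overset{b}{\to}V[1]\to U[1]$ with $U\in\mathcal{U},V\in\mathcal{V}$; and choose a distinguished triangle $V\to K_C\overset{k_C}{\to}C\overset{b\circ a}{\to}V[1]$. Then for every $X\in\mathscr{C}^-$, the map \[ \underline{k}_C\circ-\colon\underline{\mathscr{C}}^-(X,K_C)\to\underline{\mathscr{C}}(X,C) \] is bijective.
   Context: $\mathscr{C}$ is a triangulated category with shift $[1]$; subcategories are full, additive, closed under isomorphisms and direct summands. $\mathrm{Ext}^1(X,Y)=\mathscr{C}(X,Y[1])$. $\mathcal{M}\ast\mathcal{N}$ is the full subcategory of objects $C$ admitting a distinguished triangle $M\to C\to N\to M[1]$ with $M\in\mathcal{M}$, $N\in\mathcal{N}$. A cotorsion pair $(\mathcal{U},\mathcal{V})$: $\mathrm{Ext}^1(\mathcal{U},\mathcal{V})=0$ and $\mathscr{C}=\mathcal{U}\ast\mathcal{V}[1]$. Fix a twin cotorsion pair, i.e. cotorsion pairs $(\mathcal{S},\mathcal{T}),(\mathcal{U},\mathcal{V})$ with $\mathrm{Ext}^1(\mathcal{S},\mathcal{V})=0$. Put $\mathcal{W}=\mathcal{T}\cap\mathcal{U}$, $\mathscr{C}^-=\mathcal{S}[-1]\ast\mathcal{W}$. $\underline{\mathscr{C}}$ and $\underline{\mathscr{C}}^-$ denote the ideal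 quotients of $\mathscr{C}$ and $\mathscr{C}^-$ by morphisms factoring through objects of $\mathcal{W}$, and $\underline{f}$ is the image of a morphism $f$. (One has $K_C\in\mathscr{C}^-$.) *)

(* Defs.v *)
From HB Require Import structures.
From mathcomp Require Import all_boot all_algebra.
Set Implicit Arguments. Unset Strict Implicit. Unset Printing Implicit Defensive.
Import GRing.Theory.
Local Open Scope ring_scope.

Record PreaddCat := {
  Ob :> Type;
  Mor : Ob -> Ob -> zmodType;
  cmp : forall X Y Z : Ob, Mor Y Z -> Mor X Y -> Mor X Z;
  idmor : forall X : Ob, Mor X X;
  cmpA : forall X Y Z W (h : Mor Z W) (g : Mor Y Z) (f : Mor X Y),
      cmp h (cmp g f) = cmp (cmp h g) f;
  cmp1f : forall X Y (f : Mor X Y), cmp (idmor Y) f = f;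
  cmpf1 : forall X Y (f : Mor X Y), cmp f (idmor X) = f;
  cmpDl : forall X Y Z (g1 g2 : Mor Y Z) (f : Mor X Y),
      cmp (g1 + g2) f = cmp g1 f + cmp g2 f;
  cmpDr : forall X Y Z (g : Mor Y Z) (f1 f2 : Mor X Y),
      cmp g (f1 + f2) = cmp g f1 + cmp g f2
}.
Arguments Mor {p}.
Arguments cmp {p X Y Z}.
Arguments idmor {p}.

Section Basic.
Variable D : PreaddCat.

Definition isIso (X Y : D) (f : Mor X Y) :=
  exists g : Mor Y X, cmp g f = idmor X /\ cmp f g = idmor Y.

Definition iso (X Y : D) := exists f : Mor X Y, isIso f.

Definition isZero (Z : D) := idmor Z = 0.

Definition isBiprod (X Y B : D) (i1 : Mor X B) (i2 : Mor Y B)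
    (p1 : Mor B X) (p2 : Mor B Y) :=
  [/\ cmp p1 i1 = idmor X, cmp p2 i2 = idmor Y, cmp p1 i2 = 0,
      cmp p2 i1 = 0 & cmp i1 p1 + cmp i2 p2 = idmor B].

Definition additive_cat :=
  (exists Z : D, isZero Z) /\
  (forall X Y : D, exists (B : D) (i1 : Mor X B) (i2 : Mor Y B)
     (p1 : Mor B X) (p2 : Mor B Y), isBiprod i1 i2 p1 p2).

(* full subcategories: predicates on objects, additive, closed under
   isomorphisms and direct summands *)
Definition subcat (P : D -> Prop) :=
  [/\ (forall X Y : D, iso X Y -> P X -> P Y),
      (forall (X Y : D) (i : Mor X Y) (p : Mor Y X),
          cmp p i = idmor X -> P Y -> P X),
      (exists Z : D, isZero Z /\ P Z) &
      (forall (X Y B : D) (i1 : Mor X B) (i2 : Mor Y B)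
          (p1 : Mor B X) (p2 : Mor B Y),
          isBiprod i1 i2 p1 p2 -> P X -> P Y -> P B)].

Definition factors_through (W : D -> Prop) (X Y : D) (f : Mor X Y) :=
  exists (Z : D) (a : Mor X Z) (b : Mor Z Y), W Z /\ f = cmp b a.

End Basic.

Record TriCat := {
  tcat :> PreaddCat;
  tcat_additive : additive_cat tcat;
  sft : tcat -> tcat;
  sftm : forall X Y : tcat, Mor X Y -> Mor (sft X) (sft Y);
  sftmD : forall X Y (f g : Mor X Y), sftm (f + g) = sftm f + sftm g;
  sftm1 : forall X : tcat, sftm (idmor X) = idmor (sft X);
  sftmM : forall X Y Z (g : Mor Y Z) (f : Mor X Y),
      sftm (cmp g f) = cmp (sftm g) (sftm f);
  sftm_inj : forall X Y (f g : Mor X Y), sftm f = sftm g -> f = g;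
  sftm_surj : forall X Y (f : Mor (sft X) (sft Y)), exists g, sftm g = f;
  sft_esurj : forall Y : tcat, exists X, iso (sft X) Y;
  distT : forall X Y Z : tcat, Mor X Y -> Mor Y Z -> Mor Z (sft X) -> Prop;
  dist_iso : forall X Y Z X' Y' Z' (f : Mor X Y) (g : Mor Y Z) (h : Mor Z (sft X))
      (f' : Mor X' Y') (g' : Mor Y' Z') (h' : Mor Z' (sft X'))
      (a : Mor X X') (b : Mor Y Y') (c : Mor Z Z'),
      isIso a -> isIso b -> isIso c ->
      cmp b f = cmp f' a -> cmp c g = cmp g' b -> cmp (sftm a) h = cmp h' c ->
      distT f g h -> distT f' g' h';
  dist_id : forall X Z : tcat, isZero Z ->
      distT (idmor X) (0 : Mor X Z) (0 : Mor Z (sft X));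
  dist_ex : forall X Y (f : Mor X Y), exists Z (g : Mor Y Z) (h : Mor Z (sft X)),
      distT f g h;
  dist_rot : forall X Y Z (f : Mor X Y) (g : Mor Y Z) (h : Mor Z (sft X)),
      distT f g h <-> distT g h (- sftm f);
  dist_morph : forall X Y Z X' Y' Z' (f : Mor X Y) (g : Mor Y Z) (h : Mor Z (sft X))
      (f' : Mor X' Y') (g' : Mor Y' Z') (h' : Mor Z' (sft X'))
      (a : Mor X X') (b : Mor Y Y'),
      distT f g h -> distT f' g' h' -> cmp b f = cmp f' a ->
      exists c : Mor Z Z', cmp c g = cmp g' b /\ cmp (sftm a) h = cmp h' c;
  dist_oct : forall X Y Z Z' X' Y' (u : Mor X Y) (v : Mor Y Z)
      (j : Mor Y Z') (k : Mor Z' (sft X))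
      (l : Mor Z X') (i : Mor X' (sft Y))
      (m : Mor Z Y') (n : Mor Y' (sft X)),
      distT u j k -> distT v l i -> distT (cmp v u) m n ->
      exists (f : Mor Z' Y') (g : Mor Y' X'),
        [/\ distT f g (cmp (sftm j) i), cmp f j = cmp m v, cmp n f = k,
            cmp g m = l & cmp (sftm u) n = cmp i g]
}.
Arguments sft {t}.
Arguments sftm {t X Y}.
Arguments distT {t X Y Z}.

Section Tri.
Variable D : TriCat.

(* Ext^1(X, Y) = Mor(X, Y[1]) *)
Definition Ext1_vanish (P Q : D -> Prop) :=
  forall (X Y : D), P X -> Q Y -> forall f : Mor X (sft Y), f = 0.

(* objects of P[1] and P[-1] *)
Definition shifted (P : D -> Prop) (X : D) := exists Y, P Y /\ iso (sft Y) X.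
Definition unshifted (P : D -> Prop) (X : D) := P (sft X).

Definition star (M N : D -> Prop) (C : D) :=
  exists (A B : D) (f : Mor A C) (g : Mor C B) (h : Mor B (sft A)),
    [/\ M A, N B & distT f g h].

Definition cotorsion_pair (U V : D -> Prop) :=
  [/\ subcat U, subcat V, Ext1_vanish U V &
      forall C : D, star U (shifted V) C].

Definition twin_cotorsion_pair (S T U V : D -> Prop) :=
  [/\ cotorsion_pair S T, cotorsion_pair U V & Ext1_vanish S V].

Definition heartW (T U : D -> Prop) (X : D) := T X /\ U X.

Definition Cminus (S T U : D -> Prop) := star (unshifted S) (heartW T U).

(* f and g have the same image in the ideal quotient by [W] *)
Definition stable_eq (W : D -> Prop) (X Y : D) (f g : Mor X Y) :=
  factors_through W (f - g).

End Tri.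

(* Main.v *)
Require Import Defs.
From HB Require Import structures.
From mathcomp Require Import all_boot all_algebra.
Import GRing.Theory.
Local Open Scope ring_scope.

Lemma cmp0r (D : PreaddCat) (X Y Z : D) (g : Mor Y Z) : cmp g (0 : Mor X Y) = 0.
Proof.
have H := cmpDr g (0 : Mor X Y) 0; rewrite addr0 in H.
have : cmp g 0 + cmp g 0 - cmp g (0 : Mor X Y) = cmp g 0 - cmp g 0 by rewrite -H.
by rewrite addrK subrr.
Qed.

Lemma cmp0l (D : PreaddCat) (X Y Z : D) (f : Mor X Y) : cmp (0 : Mor Y Z) f = 0.
Proof.
have H := cmpDl (0 : Mor Y Z) 0 f; rewrite addr0 in H.
have : cmp 0 f + cmp 0 f - cmp (0 : Mor Y Z) f = cmp 0 f - cmp 0 f by rewrite -H.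
by rewrite addrK subrr.
Qed.

Lemma cmpNr (D : PreaddCat) (X Y Z : D) (g : Mor Y Z) (f : Mor X Y) :
  cmp g (- f) = - cmp g f.
Proof.
apply/eqP; rewrite -addr_eq0 -cmpDr addNr; apply/eqP; exact: cmp0r.
Qed.

Lemma cmpNl (D : PreaddCat) (X Y Z : D) (g : Mor Y Z) (f : Mor X Y) :
  cmp (- g) f = - cmp g f.
Proof.
apply/eqP; rewrite -addr_eq0 -cmpDl addNr; apply/eqP; exact: cmp0l.
Qed.

Lemma cmpBr (D : PreaddCat) (X Y Z : D) (g : Mor Y Z) (f1 f2 : Mor X Y) :
  cmp g (f1 - f2) = cmp g f1 - cmp g f2.
Proof. by rewrite cmpDr cmpNr. Qed.

Lemma sftm0 (D : TriCat) (X Y : D) : sftm (0 : Mor X Y) = 0.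
Proof.
have H := sftmD (0 : Mor X Y) 0; rewrite addr0 in H.
have : sftm 0 + sftm 0 - sftm (0 : Mor X Y) = sftm 0 - sftm 0 by rewrite -H.
by rewrite addrK subrr.
Qed.

Lemma sft_zero (D : TriCat) (Z : D) : isZero Z -> isZero (sft Z).
Proof. by rewrite /isZero => H; rewrite -sftm1 H sftm0. Qed.

Lemma zero_ex (D : TriCat) : exists Z : D, isZero Z.
Proof. exact: (tcat_additive D).1. Qed.

Lemma dist_comp0 (D : TriCat) (A B C : D) (f : Mor A B) (g : Mor B C)
  (h : Mor C (sft A)) : distT f g h -> cmp g f = 0.
Proof.
move=> H; have [Z HZ] := zero_ex D.
have H0 := dist_id A HZ.
have [c [Hc _]] := dist_morph H0 H (erefl (cmp f (idmor A))).
by rewrite -Hc cmp0r.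
Qed.

Lemma dist_lift (D : TriCat) (A B C : D) (f : Mor A B) (g : Mor B C)
  (h : Mor C (sft A)) (X : D) (m : Mor X B) :
  distT f g h -> cmp g m = 0 -> exists m' : Mor X A, m = cmp f m'.
Proof.
move=> H Hm; have [Z HZ] := zero_ex D.
have H0 := (dist_rot _ _ _).1 (dist_id X HZ).
have Hr := (dist_rot _ _ _).1 H.
have Heq : cmp (0 : Mor Z C) (0 : Mor X Z) = cmp g m by rewrite Hm cmp0r.
have [c [_ Hc]] := dist_morph H0 Hr Heq.
have [c' Hc'] := sftm_surj c.
exists c'; apply: sftm_inj.
move: Hc; rewrite sftm1 cmpNr cmpf1 cmpNl -Hc' -sftmM => /eqP.
by rewrite eqr_opp => /eqP.
Qed.

Lemma dist_desc (D : TriCat) (A B C : D) (f : Mor A B) (g : Mor B C)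
  (h : Mor C (sft A)) (Y : D) (m : Mor B Y) :
  distT f g h -> cmp m f = 0 -> exists m' : Mor C Y, m = cmp m' g.
Proof.
move=> H Hm; have [W HW] := zero_ex D.
have H1 := dist_id Y (@sft_zero _ _ HW).
have H2 : distT (0 : Mor W Y) (idmor Y) (0 : Mor Y (sft W)).
  by apply/dist_rot; rewrite sftm0 oppr0.
have Heq : cmp m f = cmp (0 : Mor W Y) (0 : Mor A W) by rewrite Hm cmp0r.
have [c [Hc _]] := dist_morph H H2 Heq.
by exists c; rewrite Hc cmp1f.
Qed.

Arguments dist_lift {D A B C f g h X m}.
Arguments dist_desc {D A B C f g h Y m}.

Theorem proposition3p5 (D : TriCat) (S T U V : D -> Prop)
  (Htwin : twin_cotorsion_pair S T U V)
  (C S0 T0 U0 V0 K : D)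
  (s : Mor S0 C) (a : Mor C T0) (t : Mor T0 (sft S0))
  (u : Mor U0 T0) (b : Mor T0 (sft V0)) (w : Mor (sft V0) (sft U0))
  (v : Mor V0 K) (k : Mor K C)
  (HS0 : S (sft S0)) (HT0 : T T0) (Htri1 : distT s a t)
  (HU0 : U U0) (HV0 : V V0) (Htri2 : distT u b w)
  (Htri3 : distT v k (cmp b a)) :
  forall X : D, Cminus S T U X ->
    (forall f g : Mor X K,
        stable_eq (heartW T U) (cmp k f) (cmp k g) ->
        stable_eq (heartW T U) f g) /\
    (forall h : Mor X C, exists f : Mor X K,
        stable_eq (heartW T U) (cmp k f) h).
Proof.
case: Htwin => [[HSsub HTsub HST _] [HUsub HVsub HUV _] HSV].
move=> X [A [B [iA [gX [hX [HA [HBT HBU] Hx]]]]]].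
have Hr3 := (dist_rot _ _ _).1 Htri3.
have liftK : forall (Y : D) (h : Mor Y C), U Y -> exists f, h = cmp k f.
  move=> Y h HY; exact: (dist_lift Hr3 (HUV Y V0 HY HV0 (cmp (cmp b a) h))).
split.
- move=> f g [Z [al [be [[HZT HZU] Hd]]]].
  have [be' Hbe] := liftK Z be HZU.
  have Hk : cmp k (f - g - cmp be' al) = 0.
    by rewrite !cmpBr Hd Hbe cmpA subrr.
  have [ga Hga] := dist_lift Htri3 Hk.
  have Hga0 : cmp ga iA = 0.
    apply: sftm_inj; rewrite sftm0; exact: (HSV (sft A) V0 HA HV0).
  have [ga' Hga'] := dist_desc Hx Hga0.
  have [P [i1 [i2 [p1 [p2 Hbp]]]]] := (tcat_additive D).2 Z B.
  case: (Hbp) => H11 H22 H12 H21 _.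
  case: HTsub => _ _ _ HTbp; case: HUsub => _ _ _ HUbp.
  exists P, (cmp i1 al + cmp i2 gX), (cmp be' p1 + cmp (cmp v ga') p2).
  split; first by split; [exact: (HTbp _ _ _ _ _ _ _ Hbp) | exact: (HUbp _ _ _ _ _ _ _ Hbp)].
  rewrite cmpDl !cmpDr -!cmpA !(cmpA p1) !(cmpA p2) H11 H22 H12 H21.
  rewrite !cmp1f !cmp0l !cmp0r addr0 add0r -Hga' -Hga.
  by rewrite [RHS]addrC subrK.
- move=> h.
  have e1 : cmp (cmp a h) iA = 0.
    apply: sftm_inj; rewrite sftm0; exact: (HST (sft A) T0 HA HT0).
  have [phi Hphi] := dist_desc Hx e1.
  have Hba : cmp (cmp b a) h = 0.
    by rewrite -cmpA Hphi cmpA (HUV B V0 HBU HV0 (cmp b phi)) cmp0l.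
  have [f Hf] := dist_lift Hr3 Hba.
  exists f; exists B, 0, 0; split; first by split.
  by rewrite -Hf subrr cmp0r.
Qed.
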